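(* The size $z_{77sr}$ of the self-referencing LZ77 factorization satisfies, for each edit type $\ast\in\{\mathrm{sub},\mathrm{ins},\mathrm{del}\}$: $\mathsf{MS}_{\ast}(z_{77sr},n)\le 2$ and $\mathsf{AS}_{\ast}(z_{77sr},n)\le z_{77sr}$, i.e. $z_{77sr}(T')\le 2z_{77sr}(T)$ for every string $T$ of length $n$ and every $T'$ obtained from $T$ by one edit of that type.
   Context: Strings are over an alphabet $\Sigma$; $\mathsf{ed}$ is the edit distance. $\mathsf{MS}_{\mathrm{sub}}(C,n)=\max_{T\in\Sigma^n}\{C(T')/C(T): T'\in\Sigma^n,\ \mathsf{ed}(T,T')=1\}$, with $\mathsf{MS}_{\mathrm{ins}},\mathsf{MS}_{\mathrm{del}}$ analogous for $T'$ of length $n+1$, resp. $n-1$, and $\mathsf{AS}_\ast$ analogous with $C(T')-C(T)$. The self-referencing LZ77 factorization of $T$ is $T=f_1\cdots f_z$ where for each $1\le i<z$, $f_i[1..|f_i|-1]$ is the longest prefix of $f_i\cdots f_z$ that has an occurrence in $T$ beginning at a position in $[1..|f_1\cdots f_{i-1}|]$ (the occurrence may overlap $f_i$), i.e. $f_i$ is one character longer than that; $f_z$ is the remaining suffix; $z_{77sr}(T)=z$. *)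

(* Defs.v *)
From mathcomp Require Import all_boot.
Set Implicit Arguments. Unset Strict Implicit. Unset Printing Implicit Defensive.

Section LZ.
Variable A : eqType.

Fixpoint ed (s t : seq A) {struct s} : nat :=
  match s with
  | [::] => size t
  | a :: s' =>
    let fix edt (t : seq A) : nat :=
      match t with
      | [::] => size s
      | b :: t' => minn (minn (ed s' t).+1 (edt t').+1) (ed s' t' + (a != b))
      end
    in edt t
  end.

(* Length of the longest prefix of T[i..] (0-based positions) that has an
   occurrence in T starting at some position j < i (overlaps allowed). *)
Definition lpf (T : seq A) (i : nat) : nat :=
  \max_(l < (size T - i).+1 |
        [exists j : 'I_i, take l (drop j T) == take l (drop i T)]) (l : nat).

Definition phrase_len (T : seq A) (i : nat) : nat :=
  minn (lpf T i).+1 (size T - i).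

(* Number of phrases of the greedy factorization of T[i..]; fuel bounds the
   number of phrases (each phrase has length >= 1). *)
Fixpoint z77sr_from (T : seq A) (fuel i : nat) : nat :=
  match fuel with
  | 0 => 0
  | f.+1 => if i < size T then (z77sr_from T f (i + phrase_len T i)).+1 else 0
  end.

Definition z77sr (T : seq A) : nat := z77sr_from T (size T) 0.

End LZ.

(* Main.v *)
Require Import Defs.
From mathcomp Require Import all_boot zify.
Set Implicit Arguments. Unset Strict Implicit. Unset Printing Implicit Defensive.

Section Gen.
Variable A : eqType.

Lemma take_drop_sub (X Y : seq A) i j M a b :
  take M (drop i X) = take M (drop j Y) -> b + a <= M ->
  take a (drop (i + b) X) = take a (drop (j + b) Y).
Proof.
move=> H le.
have E : forall (Z : seq A) k, take a (drop (k + b) Z) = take a (drop b (take M (drop k Z))).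
  move=> Z k.
  have -> : M = (M - b) + b by lia.
  by rewrite -take_drop take_takel ?drop_drop ?(addnC b) //; lia.
by rewrite !E H.
Qed.

Lemma take_drop_catl (u w : seq A) t k : t + k <= size u ->
  take k (drop t (u ++ w)) = take k (drop t u).
Proof.
move=> h; rewrite drop_cat; case: ifP => ht.
  by rewrite takel_cat // size_drop; lia.
have -> : k = 0 by lia.
by rewrite !take0.
Qed.

Lemma drop_cat3 (u x v : seq A) t : drop (size u + size x + t) (u ++ x ++ v) = drop t v.
Proof.
have -> : size u + size x + t = (t + size x) + size u by lia.
by rewrite -drop_drop drop_size_cat // -drop_drop drop_size_cat.
Qed.

Variable X : seq A.

Definition N i := z77sr_from X (size X) i.

Lemma pl_le i : phrase_len X i <= size X - i.
Proof. by rewrite /phrase_len geq_minr. Qed.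

Lemma pl_pos i : i < size X -> 0 < phrase_len X i.
Proof. move=> h; rewrite /phrase_len; lia. Qed.

Lemma fuel_indep f g i : size X - i <= f -> size X - i <= g ->
  z77sr_from X f i = z77sr_from X g i.
Proof.
elim: f g i => [|f IH] [|g] i hf hg //=.
- by case: ifP => // h; lia.
- by case: ifP => // h; lia.
- case: ifP => // h; congr S; apply: IH; have := pl_pos h; lia.
Qed.

Lemma N_step i : i < size X -> N i = (N (i + phrase_len X i)).+1.
Proof.
move=> h; rewrite /N (@fuel_indep (size X) (size X - i).-1.+1 i); [|lia|lia].
rewrite /= h; congr S; apply: fuel_indep; have := pl_pos h; lia.
Qed.

Lemma N_ge i : size X <= i -> N i = 0.
Proof. by move=> h; rewrite /N; case E: (size X) => [|k] //=; case: ifP => //; lia. Qed.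

Lemma lpf_ub i j l : j < i -> l <= size X - i ->
  take l (drop j X) = take l (drop i X) -> l <= lpf X i.
Proof.
move=> hj hl he; rewrite /lpf.
have hl' : l < (size X - i).+1 by [].
apply: (@leq_trans (nat_of_ord (Ordinal hl'))) => //.
apply: (leq_bigmax_cond (F := fun l : 'I_(size X - i).+1 => nat_of_ord l)).
by apply/existsP; exists (Ordinal hj); rewrite /= he.
Qed.

Lemma lpf_wit i : lpf X i = 0 \/
  exists2 j, j < i & take (lpf X i) (drop j X) = take (lpf X i) (drop i X).
Proof.
pose Q m := m = 0 \/ exists2 j, j < i & take m (drop j X) = take m (drop i X).
suff : Q (lpf X i) by [].
rewrite /lpf; apply: big_ind.
- by left.
- move=> a b ha hb; have : maxn a b = a \/ maxn a b = b by rewrite /maxn; case: ifP; auto.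
  by case=> E; rewrite /Q E.
- move=> l /existsP [j /eqP hj]; right; by exists j.
Qed.

Lemma lpf_le i : lpf X i <= size X - i.
Proof. rewrite /lpf; apply/bigmax_leqP => l _; rewrite -ltnS; exact: ltn_ord. Qed.

Lemma lpf0 : lpf X 0 = 0.
Proof. by case: (lpf_wit 0) => // [[j]]. Qed.

Lemma end_mono i i' : i <= i' -> i' < size X -> i + phrase_len X i <= i' + phrase_len X i'.
Proof.
move=> hii' hi'.
have p1 := pl_pos hi'.
rewrite /phrase_len.
case: (lpf_wit i) => [->|[j hj hE]]; first by lia.
have hl := lpf_le i.
case: (leqP (lpf X i) (i' - i)) => hd; first by lia.
have hu : lpf X i - (i' - i) <= lpf X i'.
  apply: (@lpf_ub i' (j + (i' - i))); [lia|lia|].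
  have H := @take_drop_sub X X j i (lpf X i) (lpf X i - (i' - i)) (i' - i) hE.
  rewrite -[in drop i' X](subnKC hii'); apply: H; lia.
lia.
Qed.

Lemma N_anti i i' : i <= i' -> N i' <= N i.
Proof.
move: {2}(size X - i) (leqnn (size X - i)) => k; elim: k i i' => [|k IH] i i' hk hii'.
  by rewrite N_ge //; lia.
case: (leqP (size X) i') => hi'; first by rewrite N_ge.
have hi : i < size X by lia.
rewrite (N_step hi) (N_step hi') ltnS; apply: IH; last exact: end_mono.
have := pl_pos hi; lia.
Qed.

Lemma K0 i : N i <= (N i.+1).+1.
Proof.
case: (leqP (size X) i) => hi; first by rewrite N_ge.
rewrite (N_step hi) ltnS; apply: N_anti; have := pl_pos hi; lia.
Qed.

Lemma Kp i j m : j < i -> i + m <= size X ->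
  take m (drop j X) = take m (drop i X) -> N i <= (N (i + m + 1)).+1.
Proof.
move=> hj hm hE.
case: (leqP (size X) i) => hi; first by rewrite N_ge.
have hl : m <= lpf X i by apply: (lpf_ub hj) => //; lia.
rewrite (N_step hi) ltnS.
case: (leqP (i + m + 1) (size X)) => h.
  by apply: N_anti; rewrite /phrase_len; lia.
rewrite (@N_ge (i + m + 1)) ?N_ge //; rewrite /phrase_len; lia.
Qed.

End Gen.

Lemma tdi (A : eqType) (X Y : seq A) i j i' j' k : i = i' -> j = j' ->
  take k (drop i X) = take k (drop j Y) -> take k (drop i' X) = take k (drop j' Y).
Proof. by move=> -> ->. Qed.

Lemma src (A : eqType) (X : seq A) s : 0 < s -> exists2 j, j < s &
  take (phrase_len X s).-1 (drop j X) = take (phrase_len X s).-1 (drop s X).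
Proof.
move=> hs; case: (lpf_wit X s) => [h|[j hj hE]].
  exists 0 => //; have -> : (phrase_len X s).-1 = 0 by rewrite /phrase_len h; lia.
  by rewrite !take0.
exists j => //.
have hl : (phrase_len X s).-1 <= lpf X s by rewrite /phrase_len; lia.
apply: (tdi _ _ (take_drop_sub (b := 0) hE _)); lia.
Qed.

Lemma pl0 (A : eqType) (X : seq A) : 0 < size X -> phrase_len X 0 = 1.
Proof. by move=> h; rewrite /phrase_len lpf0; lia. Qed.

Section Edit.
Variable A : eqType.
Variables u v x y : seq A.
Hypothesis hx : size x <= 1.
Hypothesis hy : size y <= 1.
Hypothesis hxy : 0 < size x + size y.
Local Notation T := (u ++ x ++ v).
Local Notation T2 := (u ++ y ++ v).
Local Notation p := (size u).
Local Notation dx := (size x).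
Local Notation dy := (size y).
Local Notation N2 := (N T2).
Local Notation N1 := (N T).

Lemma szT : size T = p + dx + size v.
Proof. by rewrite !size_cat addnA. Qed.
Lemma szT2 : size T2 = p + dy + size v.
Proof. by rewrite !size_cat addnA. Qed.

Lemma F1 t k : t + k <= p -> take k (drop t T) = take k (drop t T2).
Proof. by move=> h; rewrite !take_drop_catl. Qed.

Lemma F2 t k : take k (drop (p + dx + t) T) = take k (drop (p + dy + t) T2).
Proof. by rewrite !drop_cat3. Qed.

Lemma CR q r M :
  take M (drop q T2) = take M (drop r T) ->
  q + M + 1 <= size T2 ->
  r + dy < q + dx ->
  (r < p -> r < q) ->
  N2 q <= (N2 (q + M + 1)).+2.
Proof.
move=> h1 h2 h3 h4.
have hT := szT; have hT2 := szT2.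
have hqM : q + M <= size T2 by lia.
case: (leqP (r + M) p) => hc.
  case: (posnP M) => [M0|Mpos].
    subst M; rewrite addn0 addn1; have := K0 T2 q; lia.
  have hrq : r < q by apply: h4; lia.
  have := @Kp _ T2 q r M hrq hqM _.
  rewrite -F1 // h1 => /(_ erefl); lia.
case: (leqP (p + dx) r) => hc2.
  have hj : r - dx + dy < q by lia.
  have E : take M (drop r T) = take M (drop (r - dx + dy) T2).
    have := F2 (r - p - dx) M; apply: tdi; lia.
  have := @Kp _ T2 q (r - dx + dy) M hj hqM.
  rewrite h1 E => /(_ erefl); lia.
have P1 : N2 q <= (N2 (q + (p - r) + 1)).+1.
  case: (posnP (p - r)) => [->|hL]; first by rewrite addn0 addn1 K0.
  have hrq : r < q by apply: h4; lia.
  apply: (@Kp _ T2 q r (p - r) hrq); first by lia.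
  rewrite -F1; last by lia.
  symmetry; apply: (tdi _ _ (take_drop_sub (b := 0) (a := p - r) h1 _)); lia.
have P2 : N2 (q + (p - r) + 1) <= (N2 (q + M + 1)).+1.
  have hj : p + dy + (1 - dx) < q + (p - r) + 1 by lia.
  have := @Kp _ T2 (q + (p - r) + 1) _ (M - (p - r) - 1) hj _.
  have -> : q + (p - r) + 1 + (M - (p - r) - 1) + 1 = q + M + 1 by lia.
  apply; first by lia.
  rewrite -F2.
  have := take_drop_sub (b := p - r + 1) (a := M - (p - r) - 1) h1.
  move=> H; symmetry; apply: (tdi _ _ (H _)); lia.
lia.
Qed.


Lemma Aft s : p < s -> s <= size T -> N2 (s - dx + dy) <= 2 * N1 s.
Proof.
move: {2}(size T - s) (leqnn (size T - s)) => k; elim: k s => [|k IH] s hk hps hs;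
  have hT := szT; have hT2 := szT2.
  have -> : s = size T by lia.
  by rewrite !N_ge //; lia.
case: (leqP (size T) s) => hs'.
  by rewrite !N_ge //; lia.
have pp := pl_pos hs'; have pl := pl_le T s.
have hs0 : 0 < s by lia.
have [j hj hE] := src T hs0.
rewrite (N_step hs').
set e := s + phrase_len T s.
have h1 : take (phrase_len T s).-1 (drop (s - dx + dy) T2) = take (phrase_len T s).-1 (drop j T).
  rewrite hE; symmetry; have := F2 (s - p - dx) (phrase_len T s).-1; apply: tdi; lia.
have H : N2 (s - dx + dy) <= (N2 (e - dx + dy)).+2.
  have := CR h1; rewrite (_ : s - dx + dy + _ + 1 = e - dx + dy); [apply; lia | rewrite /e; lia].
have H2 : N2 (e - dx + dy) <= 2 * N1 e by apply: IH; rewrite /e; lia.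
lia.
Qed.

Lemma PA s j k : j < s -> s <= k -> k <= p ->
  take (phrase_len T s).-1 (drop j T) = take (phrase_len T s).-1 (drop s T) ->
  k - s <= (phrase_len T s).-1 -> N2 s <= (N2 k.+1).+1.
Proof.
move=> hj hsk hkp hE hl; have hT2 := szT2.
have := @Kp _ T2 s j (k - s) hj _ _.
have -> : s + (k - s) + 1 = k.+1 by lia.
apply; first by lia.
rewrite -F1; last by lia.
rewrite -F1; last by lia.
apply: (tdi _ _ (take_drop_sub (b := 0) (a := k - s) hE _)); lia.
Qed.


Lemma Contained s : 0 < s -> s <= p -> p < s + phrase_len T s -> s < size T ->
  N2 s <= (N2 (s + phrase_len T s - dx + dy)).+3.
Proof.
move=> hs0 hsp hpe hs.
have hT := szT; have hT2 := szT2.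
have [j hj hE] := src T hs0.
have pp := pl_pos hs; have pl := pl_le T s.
move: hE; set L := (phrase_len T s).-1 => hE.
have eL : phrase_len T s = L.+1 by rewrite /L; lia.
rewrite eL in hpe *.
have hPA := fun k h1 h2 => @PA s j k hj h1 h2 hE.
have [hdy|hdy] : dy = 0 \/ dy = 1 by lia.
- have hdx : dx = 1 by lia.
  case: (ltngtP (s + L.+1) (p + 2)) => hc.
  +
    case: (posnP (p - s)) => hps.
      have -> : s + L.+1 - dx + dy = s by lia.
      lia.
    have := hPA p.-1 _ _ _; rewrite (_ : p.-1.+1 = s + L.+1 - dx + dy); last by lia.
    move=> H; apply: leq_trans (H _ _ _) _; lia.
  +
    have h1 : take (s + L.+1 - p - 3) (drop p.+1 T2) =
              take (s + L.+1 - p - 3) (drop (j + (p - s + 2)) T).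
      rewrite (take_drop_sub (b := p - s + 2) (a := s + L.+1 - p - 3) hE); last by lia.
      have := F2 1 (s + L.+1 - p - 3) => H; symmetry; apply: (tdi _ _ H); lia.
    have H := CR h1.
    rewrite (_ : p.+1 + (s + L.+1 - p - 3) + 1 = s + L.+1 - dx + dy) in H; last by lia.
    have H1 : N2 s <= (N2 p.+1).+1 by apply: hPA; lia.
    have H3 : N2 p.+1 <= (N2 (s + L.+1 - dx + dy)).+2 by apply: H; lia.
    lia.
  +
    have := hPA p _ _ _; rewrite (_ : p.+1 = s + L.+1 - dx + dy); last by lia.
    move=> H; apply: leq_trans (H _ _ _) _; lia.
- case: (leqP (p + 1 + dx) (s + L.+1)) => hc.
  + have h1 : take (s + L.+1 - p - 1 - dx) (drop p.+1 T2) =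
              take (s + L.+1 - p - 1 - dx) (drop (j + (p - s + dx)) T).
      rewrite (take_drop_sub (b := p - s + dx) (a := s + L.+1 - p - 1 - dx) hE); last by lia.
      have := F2 0 (s + L.+1 - p - 1 - dx) => H; symmetry; apply: (tdi _ _ H); lia.
    have H := CR h1.
    rewrite (_ : p.+1 + (s + L.+1 - p - 1 - dx) + 1 = s + L.+1 - dx + dy) in H; last by lia.
    have H1 : N2 s <= (N2 p.+1).+1 by apply: hPA; lia.
    have H3 : N2 p.+1 <= (N2 (s + L.+1 - dx + dy)).+2 by apply: H; lia.
    lia.
  + have := hPA p _ _ _; rewrite (_ : p.+1 = s + L.+1 - dx + dy); last by lia.
    move=> H; apply: leq_trans (H _ _ _) _; lia.
Qed.


Lemma Bef s : 0 < size T -> s <= p -> s <= size T -> N2 s <= 2 * N1 s + minn s 1.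
Proof.
move=> hn.
move: {2}(size T - s) (leqnn (size T - s)) => k; elim: k s => [|k IH] s hk hsp hs;
  have hT := szT; have hT2 := szT2.
  have hK := K0 T2 s; rewrite (@N_ge _ T2 s.+1) in hK; last by lia.
  rewrite (@N_ge _ T s); last by lia.
  have hs0 : 0 < s by lia.
  lia.
case: (leqP (size T) s) => hs'.
  have hK := K0 T2 s; rewrite (@N_ge _ T2 s.+1) in hK; last by lia.
  rewrite (@N_ge _ T s); last by lia.
  have hs0 : 0 < s by lia.
  lia.
have pp := pl_pos hs'; have pl := pl_le T s.
rewrite (N_step hs').
case: (leqP (s + phrase_len T s) p) => hep.
  have H1 : N2 s <= (N2 (s + phrase_len T s)).+1.
    case: (posnP s) => [s0|hs0].
      by subst s; rewrite pl0 //; exact: K0.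
    have [j hj hE] := src T hs0.
    have := @PA s j (s + phrase_len T s).-1 hj _ _ hE _.
    rewrite (_ : (s + phrase_len T s).-1.+1 = s + phrase_len T s); last by lia.
    by apply; lia.
  have : N2 (s + phrase_len T s) <= 2 * N1 (s + phrase_len T s) + minn (s + phrase_len T s) 1
    by apply: IH; lia.
  have he0 : 0 < s + phrase_len T s by lia.
  lia.
case: (posnP s) => [s0|hs0].
  subst s; rewrite pl0 // in hep *.
  have p0 : p = 0 by lia.
  have H1 : N2 0 <= (N2 2).+2 by have := K0 T2 0; have := K0 T2 1; lia.
  have H2 : N2 2 <= N2 (1 - dx + dy) by apply: N_anti; lia.
  have H3 : N2 (1 - dx + dy) <= 2 * N1 1 by apply: Aft; lia.
  rewrite add0n in H3 *; lia.
have H1 := @Contained s hs0 hsp hep hs'.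
have H2 : N2 (s + phrase_len T s - dx + dy) <= 2 * N1 (s + phrase_len T s) by apply: Aft; lia.
lia.
Qed.

Lemma main_gen : 0 < size T -> z77sr T2 <= 2 * z77sr T.
Proof.
move=> hn; have := @Bef 0 hn (leq0n _) (leq0n _).
by rewrite /z77sr /N addn0.
Qed.

End Edit.

Section Ed.
Variable A : eqType.
Implicit Types s t : seq A.

Lemma edE (a b : A) s t : ed (a :: s) (b :: t) =
  minn (minn (ed s (b :: t)).+1 (ed (a :: s) t).+1) (ed s t + (a != b)).
Proof. by []. Qed.

Lemma ed_size s t : size t - size s <= ed s t /\ size s - size t <= ed s t.
Proof.
elim: s t => [|a s IH] t; first by rewrite /=; lia.
elim: t => [|b t IHt]; first by rewrite /=; lia.
rewrite edE; have := IH t; have := IH (b :: t); move: IHt; rewrite /=; lia.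
Qed.

Lemma ed0 s t : ed s t = 0 -> s = t.
Proof.
elim: s t => [|a s IH] [|b t] //=.
rewrite -/(ed (a :: s) t) => h.
have h' : ed s t + (a != b) = 0 by lia.
case: eqVneq h' => [<-|neq]; last by lia.
by rewrite addn0 => /IH ->.
Qed.

Lemma ed1_sub s t : ed s t = 1 -> size t = size s ->
  exists u a c v, s = u ++ a :: v /\ t = u ++ c :: v.
Proof.
elim: s t => [|a s IH] [|b t] //=.
rewrite -/(ed (a :: s) t) => h hs.
have [H1 _] := ed_size s (b :: t); have [_ H2] := ed_size (a :: s) t.
have e1 : size (b :: t) = (size t).+1 by []; have e2 : size (a :: s) = (size s).+1 by [].
have h' : ed s t + (a != b) = 1 by lia.
case: eqVneq h' => [<-|neq].
  rewrite addn0 => h1; have [|u [a' [c [v [-> ->]]]]] := IH t h1; first by lia.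
  by exists (a :: u), a', c, v.
rewrite addn1 => /eq_add_S /ed0 ->.
by exists [::], a, b, t.
Qed.

Lemma ed1_ins s t : ed s t = 1 -> size t = (size s).+1 ->
  exists u c v, s = u ++ v /\ t = u ++ c :: v.
Proof.
elim: s t => [|a s IH] [|b t] //=.
  case: t => // _ _; by exists [::], b, [::].
rewrite -/(ed (a :: s) t) => h hs.
have [H1 _] := ed_size s (b :: t); have [H3 _] := ed_size s t.
have e1 : size (b :: t) = (size t).+1 by []; have e2 : size (a :: s) = (size s).+1 by [].
have [h0|h1] : ed (a :: s) t = 0 \/ ed s t + (a != b) = 1 by lia.
  by move/ed0: h0 <-; exists [::], b, (a :: s).
case: eqVneq h1 => [<-|neq]; last by lia.
rewrite addn0 => h2; have [|u [c [v [-> ->]]]] := IH t h2; first by lia.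
by exists (a :: u), c, v.
Qed.

Lemma ed1_del s t : ed s t = 1 -> size s = (size t).+1 ->
  exists u a v, s = u ++ a :: v /\ t = u ++ v.
Proof.
elim: s t => [|a s IH] [|b t] //=.
  case: s {IH} => // _ _; by exists [::], a, [::].
rewrite -/(ed (a :: s) t) => h hs.
have [_ H1] := ed_size (a :: s) t; have [_ H3] := ed_size s t.
have e1 : size (b :: t) = (size t).+1 by []; have e2 : size (a :: s) = (size s).+1 by [].
have [h0|h1] : ed s (b :: t) = 0 \/ ed s t + (a != b) = 1 by lia.
  by move/ed0: h0 <-; exists [::], a, s.
case: eqVneq h1 => [<-|neq]; last by lia.
rewrite addn0 => h2; have [|u [c [v [-> ->]]]] := IH t h2; first by lia.
by exists (a :: u), c, v.
Qed.

End Ed.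

Theorem mainTheorem11 :
  forall (A : eqType) (n : nat) (T : seq A), size T = n -> 0 < n ->
    (forall T' : seq A, size T' = n -> ed T T' = 1 ->
        z77sr T' <= 2 * z77sr T /\ z77sr T' - z77sr T <= z77sr T) /\
    (forall T' : seq A, size T' = n.+1 -> ed T T' = 1 ->
        z77sr T' <= 2 * z77sr T /\ z77sr T' - z77sr T <= z77sr T) /\
    (forall T' : seq A, size T' = n.-1 -> ed T T' = 1 ->
        z77sr T' <= 2 * z77sr T /\ z77sr T' - z77sr T <= z77sr T).
Proof.
move=> A n T hT hn; subst n.
have fin : forall T', z77sr T' <= 2 * z77sr T ->
    z77sr T' <= 2 * z77sr T /\ z77sr T' - z77sr T <= z77sr T by move=> T' h; split; lia.
split; [|split] => T' hs he; apply: fin.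
- have [u [a [c [v [E1 E2]]]]] := ed1_sub he hs.
  subst T T'.
  exact: (@main_gen A u v [:: a] [:: c] isT isT isT hn).
- have [u [c [v [E1 E2]]]] := ed1_ins he hs.
  subst T T'.
  exact: (@main_gen A u v [::] [:: c] isT isT isT hn).
- have hs' : size T = (size T').+1 by lia.
  have [u [a [v [E1 E2]]]] := ed1_del he hs'.
  subst T T'.
  exact: (@main_gen A u v [:: a] [::] isT isT isT hn).
Qed.
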